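(* Let $G$ be a graph and $(x,y)\in E(G)$. Let $\Delta_G(x,y)=N_G(x)\cap N_G(y)$, $R_G(x)=(N_G(x)\setminus\{y\})\setminus\Delta_G(x,y)$ and $R_G(y)=(N_G(y)\setminus\{x\})\setminus\Delta_G(x,y)$. Suppose that for some $k\le\min\{|R_G(x)|,|R_G(y)|\}$ there exist distinct $a_1,\dots,a_k\in R_G(x)$ and distinct $b_1,\dots,b_k\in R_G(y)$ with $d_G(a_i,b_i)\le 2$ for all $i$ (a 2-matching of size $k$). Then $$\kappa(x,y)\ge -2+\frac{3|\Delta_G(x,y)|+k+2}{\max\{d_x,d_y\}}.$$ Moreover, if $k=\min\{|R_G(x)|,|R_G(y)|\}$, then $$\kappa(x,y)\ge -2+\frac{2|\Delta_G(x,y)|+\min\{d_x,d_y\}+1}{\max\{d_x,d_y\}}.$$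
   Context: Graphs are locally finite and unweighted. $d_G$ is the shortest-path metric, $N_G(v)$ the neighbour set and $d_v$ the degree of $v$; $m_v$ is the uniform probability measure on $N_G(v)$, and for an edge $(x,y)$, $\kappa(x,y)=1-W_1(m_x,m_y)$, where $W_1$ is the Wasserstein-1 (transportation) distance with respect to $d_G$. *)

(* Defs.v *)
From HB Require Import structures.
From mathcomp Require Import all_boot all_order all_algebra.
From mathcomp Require Import finmap.
From mathcomp Require Import boolp classical_sets reals.
Set Implicit Arguments. Unset Strict Implicit. Unset Printing Implicit Defensive.
Import Order.TTheory GRing.Theory Num.Theory.
Local Open Scope fset_scope.
Local Open Scope ring_scope.

(* A (possibly infinite) locally finite simple graph on a choiceType T is
   given by its neighbourhood map N : T -> {fset T}, assumed symmetric and
   loopless (hypotheses in the theorem). *)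

Section Graph.
Variables (T : choiceType) (N : T -> {fset T}).

Fixpoint walk (n : nat) (u v : T) : Prop :=
  match n with
  | 0 => u = v
  | n'.+1 => exists2 w, w \in N u & walk n' w v
  end.

(* shortest-path distance d_G(u,v) (junk value 0 if u, v are in different
   components; never used in that case below) *)
Definition gdist (u v : T) : nat :=
  match pselect (exists n, `[< walk n u v >]) with
  | left P => ex_minn P
  | right _ => 0%N
  end.

Definition deg (v : T) : nat := #|` N v|.

Variable R : realType.

Definition coupling (x y : T) (p : T -> T -> R) : Prop :=
  (forall u v, 0 <= p u v) /\
  (forall u, u \in N x -> \sum_(v <- N y) p u v = (deg x)%:R^-1) /\
  (forall v, v \in N y -> \sum_(u <- N x) p u v = (deg y)%:R^-1).

Definition transport_cost (x y : T) (p : T -> T -> R) : R :=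
  \sum_(u <- N x) \sum_(v <- N y) p u v * (gdist u v)%:R.

Definition W1 (x y : T) : R :=
  inf [set c | exists2 p, coupling x y p & c = transport_cost x y p].

Definition kappa (x y : T) : R := 1 - W1 x y.

Definition Delta (x y : T) : {fset T} := N x `&` N y.
Definition Rset (x y : T) : {fset T} := (N x `\ y) `\` Delta x y.

End Graph.

(* Main.v *)
Require Import Defs.
From HB Require Import structures.
From mathcomp Require Import all_boot all_order all_algebra.
From mathcomp Require Import finmap.
From mathcomp Require Import boolp classical_sets reals.
Import Order.TTheory GRing.Theory Num.Theory.
Local Open Scope fset_scope.
Local Open Scope ring_scope.
From mathcomp Require Import ring lra zify.

Lemma sum_pick (R : numDomainType) (T : eqType) (s : seq T) (w : T) (F : T -> R) :
  uniq s -> \sum_(v <- s) (v == w)%:R * F v = (w \in s)%:R * F w.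
Proof.
elim: s => [|z s IH] /=; first by rewrite big_nil; case: (w \in [::]) (in_nil w) => // _; rewrite mul0r.
case/andP=> zs us; rewrite big_cons IH // in_cons.
case: (eqVneq z w) => [<-|ne] /=.
  by rewrite (negbTE zs) mul0r addr0 mul1r.
by rewrite mul0r add0r.
Qed.

Lemma sum_pick1 (R : numDomainType) (T : eqType) (s : seq T) (w : T) :
  uniq s -> \sum_(v <- s) (v == w)%:R = (w \in s)%:R :> R.
Proof.
move=> us; have := @sum_pick R T s w (fun _ => 1) us.
by rewrite mulr1; under eq_bigr do rewrite mulr1.
Qed.

Lemma le_sum_mem (R : numDomainType) (T : eqType) (s : seq T) (u : T) (F : T -> R) :
  (forall x, 0 <= F x) -> u \in s -> F u <= \sum_(v <- s) F v.
Proof.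
move=> F0; elim: s => [|z s IH] //=; rewrite in_cons big_cons.
case/orP=> [/eqP->|us].
  by rewrite lerDl sumr_ge0.
by apply: le_trans (IH us) _; rewrite lerDr.
Qed.

Lemma sum_const_seq (R : numDomainType) (T : Type) (s : seq T) (c : R) :
  \sum_(v <- s) c = (size s)%:R * c.
Proof.
elim: s => [|z s IH]; first by rewrite big_nil mul0r.
by rewrite big_cons IH /= -addn1 natrD mulrDl mul1r addrC.
Qed.

Lemma gdist_le (T : choiceType) (N : T -> {fset T}) n u v :
  walk N n u v -> (gdist N u v <= n)%N.
Proof.
move=> W; rewrite /gdist; case: pselect => [P|//].
case: ex_minnP => m _ Hmin; apply: Hmin; exact/asboolP.
Qed.
Lemma complete (R : realType) (T : eqType) (s1 s2 : seq T) (al be : R)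
  (q dd : T -> T -> R) :
  (size s1)%:R * al = 1 -> (size s2)%:R * be = 1 ->
  (forall u v, 0 <= q u v) ->
  (forall u, \sum_(v <- s2) q u v <= al) ->
  (forall v, \sum_(u <- s1) q u v <= be) ->
  (forall u v, u \in s1 -> v \in s2 -> dd u v <= 3) ->
  exists p : T -> T -> R,
    [/\ (forall u v, 0 <= p u v),
        (forall u, u \in s1 -> \sum_(v <- s2) p u v = al),
        (forall v, v \in s2 -> \sum_(u <- s1) p u v = be) &
        \sum_(u <- s1) \sum_(v <- s2) p u v * dd u v <=
          3 - \sum_(u <- s1) \sum_(v <- s2) q u v * (3 - dd u v)].
Proof.
move=> h1 h2 q0 hr hc hd.
pose rx u := al - \sum_(v <- s2) q u v.
pose ry v := be - \sum_(u <- s1) q u v.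
pose Q := \sum_(u <- s1) \sum_(v <- s2) q u v.
pose S := \sum_(u <- s1) rx u.
have rx0 u : 0 <= rx u by rewrite subr_ge0.
have ry0 v : 0 <= ry v by rewrite subr_ge0.
have SE : S = 1 - Q by rewrite /S big_split /= sumrN sum_const_seq h1.
have SyE : \sum_(v <- s2) ry v = S.
  by rewrite SE big_split /= sumrN sum_const_seq h2 /Q; congr (_ - _); exact: exchange_big.
have S0 : 0 <= S by apply: sumr_ge0.
exists (fun u v => q u v + rx u * ry v / S); split.
- by move=> u v; rewrite addr_ge0 // mulr_ge0 ?invr_ge0 // mulr_ge0.
- move=> u us; rewrite big_split /=.
  have -> : \sum_(v <- s2) rx u * ry v / S = rx u * S / S.
    by rewrite -SyE mulr_sumr mulr_suml.
  case: (eqVneq S 0) => [Sz|Sn].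
    have rz : rx u = 0.
      by apply/le_anti; rewrite rx0 andbT -Sz; apply: le_sum_mem.
    by move: rz; rewrite Sz invr0 !mulr0 addr0 /rx => /eqP; rewrite subr_eq0 => /eqP.
  by rewrite mulfK // /rx addrC subrK.
- move=> v vs; rewrite big_split /=.
  have -> : \sum_(u <- s1) rx u * ry v / S = S * ry v / S.
    by rewrite mulr_suml mulr_suml.
  case: (eqVneq S 0) => [Sz|Sn].
    have rz : ry v = 0.
      by apply/le_anti; rewrite ry0 andbT -Sz -SyE; apply: le_sum_mem.
    by move: rz; rewrite Sz invr0 !mulr0 addr0 /ry => /eqP; rewrite subr_eq0 => /eqP.
  by rewrite mulrAC mulfV // mul1r /ry addrC subrK.
- have E1 : \sum_(u <- s1) \sum_(v <- s2) q u v * (3 - dd u v) =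
      3 * Q - \sum_(u <- s1) \sum_(v <- s2) q u v * dd u v.
    rewrite /Q mulr_sumr -sumrB; apply: eq_bigr => u _.
    rewrite mulr_sumr -sumrB; apply: eq_bigr => v _.
    by rewrite mulrBr mulrC.
  have E2 : \sum_(u <- s1) \sum_(v <- s2) (q u v + rx u * ry v / S) * dd u v =
     \sum_(u <- s1) \sum_(v <- s2) q u v * dd u v +
     \sum_(u <- s1) \sum_(v <- s2) rx u * ry v / S * dd u v.
    rewrite -big_split /=; apply: eq_bigr => u _.
    by rewrite -big_split /=; apply: eq_bigr => v _; rewrite mulrDl.
  have E3 : \sum_(u <- s1) \sum_(v <- s2) rx u * ry v / S * dd u v <=
            \sum_(u <- s1) \sum_(v <- s2) rx u * ry v / S * 3.
    rewrite big_seq_cond [X in _ <= X]big_seq_cond.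
    apply: ler_sum => u /andP[us _].
    rewrite big_seq_cond [X in _ <= X]big_seq_cond.
    apply: ler_sum => v /andP[vs _].
    apply: ler_wpM2l; last exact: hd us vs.
    by rewrite mulr_ge0 ?invr_ge0 // mulr_ge0.
  have E4 : \sum_(u <- s1) \sum_(v <- s2) rx u * ry v / S * 3 = 3 * S.
    have -> : \sum_(u <- s1) \sum_(v <- s2) rx u * ry v / S * 3 =
              \sum_(u <- s1) rx u * (\sum_(v <- s2) ry v) * (3 / S).
      apply: eq_bigr => u _; rewrite mulr_sumr mulr_suml; apply: eq_bigr => v _.
      by rewrite mulrA mulrAC -!mulrA.
    rewrite -mulr_suml SyE -mulr_suml -/S.
    case: (eqVneq S 0) => [->|Sn]; first by rewrite !(mulr0, mul0r).
    by field.
  rewrite E2 E1; apply: le_trans (lerD (lexx _) E3) _.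
  rewrite E4 SE; lra.
Qed.

Lemma sum_pick2 (R : numDomainType) (T : eqType) (s1 s2 : seq T) (w1 w2 : T)
  (G : T -> T -> R) : uniq s1 -> uniq s2 -> w1 \in s1 -> w2 \in s2 ->
  \sum_(u <- s1) \sum_(v <- s2) (u == w1)%:R * (v == w2)%:R * G u v = G w1 w2.
Proof.
move=> u1 u2 h1 h2.
have E u : \sum_(v <- s2) (u == w1)%:R * (v == w2)%:R * G u v = (u == w1)%:R * G u w2.
  rewrite (eq_bigr (fun v => (v == w2)%:R * ((u == w1)%:R * G u v))); last first.
    by move=> v _; rewrite -mulrA mulrCA.
  by rewrite sum_pick // h2 mul1r.
by rewrite (eq_bigr _ (fun u _ => E u)) sum_pick // h1 mul1r.
Qed.

Lemma E_le1 (R : numDomainType) (T : eqType) k (f : 'I_k -> T) (u : T)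
  (P1 P2 : bool) : injective f -> ~~ (P1 && P2) ->
  (forall i, f i = u -> ~~ P1 && ~~ P2) ->
  P1%:R + P2%:R + \sum_(i < k) (u == f i)%:R <= 1 :> R.
Proof.
move=> finj h12 hf.
case: (pselect (exists i, f i = u)) => [[i0 Hi0]|nE].
  have -> : \sum_(i < k) (u == f i)%:R = 1 :> R.
    rewrite -Hi0 (bigD1 i0) //= eqxx big1 ?addr0 // => j /negbTE.
    by rewrite (inj_eq finj) eq_sym => ->.
  by case/andP: (hf i0 Hi0) => /negbTE-> /negbTE->; rewrite !add0r.
rewrite big1 ?addr0; last first.
  move=> i _; case: eqVneq => // ui; by exfalso; apply: nE; exists i.
by move: h12 hf; case: P1; case: P2 => //= _ _; rewrite ?add0r ?addr0.
Qed.

Theorem lemma5p1 (R : realType) (T : choiceType) (N : T -> {fset T})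
  (Nsym : forall u v : T, (v \in N u) = (u \in N v))
  (Nirr : forall u : T, u \notin N u)
  (x y : T) (hxy : y \in N x)
  (k : nat) (hk : (k <= minn #|` Rset N x y| #|` Rset N y x|)%N)
  (a b : 'I_k -> T) (ainj : injective a) (binj : injective b)
  (ha : forall i, a i \in Rset N x y) (hb : forall i, b i \in Rset N y x)
  (hab : forall i, (gdist N (a i) (b i) <= 2)%N) :
  (kappa N R x y) >= -2 + (3 * #|` Delta N x y| + k + 2)%:R
                         / (maxn (deg N x) (deg N y))%:R
  /\ (k = minn #|` Rset N x y| #|` Rset N y x| ->
      (kappa N R x y) >= -2 + (2 * #|` Delta N x y| + minn (deg N x) (deg N y) + 1)%:R
                            / (maxn (deg N x) (deg N y))%:R).
Proof.
set D := Delta N x y.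
have xy : x \in N y by rewrite -Nsym.
have Dmem u : (u \in D) = (u \in N x) && (u \in N y) by rewrite /D /Delta in_fsetI.
have haP i : [/\ a i \notin D, a i != y & a i \in N x].
  by move: (ha i); rewrite /Rset in_fsetD in_fsetD1 => /andP[h1 /andP[h2 h3]].
have hbP i : [/\ b i \notin D, b i != x & b i \in N y].
  move: (hb i); rewrite /Rset /Delta in_fsetD in_fsetD1 in_fsetI.
  move=> /andP[h1 /andP[h2 h3]]; split => //.
  by rewrite Dmem; move: h1; rewrite h3 /= andbT.
have haN i : a i \in N x by case: (haP i).
have hbN i : b i \in N y by case: (hbP i).
set dx := deg N x; set dy := deg N y; set m := maxn dx dy.
have dxpos : (0 < dx)%N by rewrite /dx /deg (cardfsD1 y) hxy.
have dypos : (0 < dy)%N by rewrite /dy /deg (cardfsD1 x) xy.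
have mpos : (0 < m)%N by apply: leq_trans dxpos (leq_maxl _ _).
set c : R := (m%:R)^-1.
have c0 : 0 <= c by rewrite /c invr_ge0 ler0n.
have cx : c <= (dx%:R)^-1.
  by rewrite /c lef_pV2 ?posrE ?ltr0n // ler_nat leq_maxl.
have cy : c <= (dy%:R)^-1.
  by rewrite /c lef_pV2 ?posrE ?ltr0n // ler_nat leq_maxr.
pose w u v : R := (v == u)%:R * (u \in D)%:R + (u == y)%:R * (v == x)%:R
   + \sum_(i < k) (u == a i)%:R * (v == b i)%:R.
pose g u v : R := 3 - (gdist N u v)%:R.
have ux := fset_uniq (N x); have uy := fset_uniq (N y).
have hrow u : \sum_(v <- N y) c * w u v <= (dx%:R)^-1.
  rewrite -mulr_sumr; apply: le_trans cx; apply: ler_piMr => //.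
  rewrite /w !big_split /= sum_pick // -mulr_sumr sum_pick1 // xy mulr1.
  rewrite exchange_big /=.
  under eq_bigr do rewrite -mulr_sumr sum_pick1 // hbN mulr1.
  have h12 : ~~ ((u \in D) && (u == y)).
    apply/negP => /andP[/[swap] /eqP-> ]; rewrite Dmem => /andP[_]; by rewrite (negbTE (Nirr y)).
  have hf : forall i, a i = u -> ~~ (u \in D) && ~~ (u == y).
    by move=> i <-; case: (haP i) => -> ->.
  refine (le_trans _ (@E_le1 R _ _ a u (u \in D) (u == y) ainj h12 hf)).
  by rewrite lerD2r lerD2r ler_piMl ?ler0n // lern1 leq_b1.
have hcol v : \sum_(u <- N x) c * w u v <= (dy%:R)^-1.
  rewrite -mulr_sumr; apply: le_trans cy; apply: ler_piMr => //.
  rewrite /w !big_split /=.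
  under eq_bigr do rewrite eq_sym.
  rewrite sum_pick // -mulr_suml sum_pick1 // hxy mul1r.
  rewrite exchange_big /=.
  under eq_bigr do rewrite -mulr_suml sum_pick1 // haN mul1r.
  have h12 : ~~ ((v \in D) && (v == x)).
    apply/negP => /andP[/[swap] /eqP-> ]; rewrite Dmem => /andP[]; by rewrite (negbTE (Nirr x)).
  have hf : forall i, b i = v -> ~~ (v \in D) && ~~ (v == x).
    by move=> i <-; case: (hbP i) => -> ->.
  refine (le_trans _ (@E_le1 R _ _ b v (v \in D) (v == x) binj h12 hf)).
  by rewrite lerD2r lerD2r ler_piMl ?ler0n // lern1 leq_b1.
have hd u v : u \in N x -> v \in N y -> (gdist N u v)%:R <= 3 :> R.
  move=> hu hv; rewrite ler_nat; apply: gdist_le.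
  by exists x; [rewrite Nsym | exists y => //; exists v].
have g0 u : g u u = 3.
  have : (gdist N u u <= 0)%N by exact: (@gdist_le _ N 0 u u).
  by rewrite leqn0 /g => /eqP->; rewrite subr0.
have sav : (3 * #|` D| + k + 2)%:R <=
   \sum_(u <- N x) \sum_(v <- N y) w u v * g u v.
  have -> : \sum_(u <- N x) \sum_(v <- N y) w u v * g u v =
     \sum_(u <- N x) \sum_(v <- N y) (v == u)%:R * (u \in D)%:R * g u v +
     \sum_(u <- N x) \sum_(v <- N y) (u == y)%:R * (v == x)%:R * g u v +
     \sum_(u <- N x) \sum_(v <- N y) (\sum_(i < k) (u == a i)%:R * (v == b i)%:R) * g u v.
    rewrite -!big_split; apply: eq_bigr => u _.
    by rewrite -!big_split; apply: eq_bigr => v _; rewrite /w !mulrDl.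
  have P1 : \sum_(u <- N x) \sum_(v <- N y) (v == u)%:R * (u \in D)%:R * g u v
            = 3 * (#|` D|)%:R.
    have -> : \sum_(u <- N x) \sum_(v <- N y) (v == u)%:R * (u \in D)%:R * g u v
              = \sum_(u <- N x) (u \in D)%:R * 3.
      apply: eq_bigr => u _.
      under eq_bigr do rewrite -mulrA.
      rewrite sum_pick // g0; case: (boolP (u \in D)) => hu.
        by move: (hu); rewrite Dmem => /andP[_ ->]; rewrite mul1r.
      by rewrite /= mulr0n !mul0r mulr0.
    rewrite -mulr_suml mulrC; congr (_ * _).
    rewrite -(big_fset_incl _ (fsubsetIl (N x) (N y))); last first.
      by move=> u _ hu; rewrite /D /Delta (negbTE hu).
    rewrite big_seq (eq_bigr (fun _ => 1)); last first.
      by move=> u hu; rewrite /D /Delta hu.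
    by rewrite -big_seq sum_const_seq mulr1.
  have P2 : 2 <= \sum_(u <- N x) \sum_(v <- N y) (u == y)%:R * (v == x)%:R * g u v.
    rewrite sum_pick2 // /g.
    have : (gdist N y x <= 1)%N by apply: (@gdist_le _ N 1 y x); exists x.
    rewrite -(ler_nat R) => h; lra.
  have P3 : k%:R <= \sum_(u <- N x) \sum_(v <- N y)
                (\sum_(i < k) (u == a i)%:R * (v == b i)%:R) * g u v.
    have -> : \sum_(u <- N x) \sum_(v <- N y)
                (\sum_(i < k) (u == a i)%:R * (v == b i)%:R) * g u v =
              \sum_(i < k) g (a i) (b i).
      under eq_bigr do under eq_bigr do rewrite mulr_suml.
      under eq_bigr do rewrite exchange_big /=.
      rewrite exchange_big /=; apply: eq_bigr => i _.
      by rewrite sum_pick2 // ?haN ?hbN.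
    have -> : k%:R = \sum_(i < k) (1 : R) by rewrite sumr_const card_ord.
    apply: ler_sum => i _; rewrite /g.
    have := hab i; rewrite -(ler_nat R) => h; lra.
  rewrite P1 !natrD; lra.
have e1 : (size (N x))%:R * (dx%:R)^-1 = 1 :> R.
  by rewrite mulfV // pnatr_eq0 -lt0n.
have e2 : (size (N y))%:R * (dy%:R)^-1 = 1 :> R.
  by rewrite mulfV // pnatr_eq0 -lt0n.
have q0 : forall u v, 0 <= c * w u v.
  move=> u v; apply: mulr_ge0 => //; rewrite /w !addr_ge0 ?sumr_ge0 ?mulr_ge0 //.
  by move=> i _; rewrite mulr_ge0.
have [p [p0 prow pcol pcost]] :=
  @complete R T (N x) (N y) (dx%:R)^-1 (dy%:R)^-1 (fun u v => c * w u v)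
     (fun u v => (gdist N u v)%:R) e1 e2 q0 hrow hcol hd.
have W1le : W1 N R x y <= 3 - c * (3 * #|` D| + k + 2)%:R.
  have Wc : W1 N R x y <= transport_cost N x y p.
    apply: ge_inf; last by exists p => //; split => //; split.
    exists 0 => z Ez; case: Ez => p' [p'0 _] ->; apply: sumr_ge0 => u _; apply: sumr_ge0 => v _.
    by rewrite mulr_ge0 ?p'0.
  apply: le_trans Wc _.
  apply: le_trans pcost _; rewrite lerD2l lerN2.
  have -> : \sum_(u <- N x) \sum_(v <- N y) c * w u v * (3 - (gdist N u v)%:R) =
            c * \sum_(u <- N x) \sum_(v <- N y) w u v * g u v.
    rewrite mulr_sumr; apply: eq_bigr => u _; rewrite mulr_sumr.
    by apply: eq_bigr => v _; rewrite mulrA.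
  exact: ler_wpM2l.
have part1 : -2 + (3 * #|` D| + k + 2)%:R / m%:R <= kappa N R x y.
  rewrite /kappa; move: W1le; rewrite /c; lra.
split => // hkm.
apply: le_trans part1; rewrite lerD2l ler_wpM2r ?invr_ge0 ?ler0n // ler_nat.
have hRx : (dx <= #|` Rset N x y| + #|` D| + 1)%N.
  rewrite /Rset cardfsD /dx /deg (cardfsD1 y (N x)) hxy.
  have := fsubset_leq_card (fsubsetIr (N x `\ y) (Delta N x y)); rewrite -/D.
  lia.
have hRy : (dy <= #|` Rset N y x| + #|` D| + 1)%N.
  rewrite /Rset cardfsD /dy /deg (cardfsD1 x (N y)) xy.
  have := fsubset_leq_card (fsubsetIr (N y `\ x) (Delta N y x)).
  have tD : #|` Delta N y x| = #|` D| by rewrite /D /Delta fsetIC.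
  rewrite tD; lia.
rewrite hkm; lia.
Qed.
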